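(* Let $P=(p_1,\dots,p_S)$ be a probability distribution on $\{1,\dots,S\}$ and $\hat P_n$ the empirical distribution of $n$ i.i.d. samples from $P$. Then, as $n\to\infty$, the bias $b=\mathbb E[Q(\hat P_n)]-Q(P)$ satisfies $|b|=\mathcal O\big(S\log(n)/n\big)$, i.e. $b^2=\mathcal O\big((S\log(n)/n)^2\big)$.
   Context: For a probability vector $P=(p_1,\dots,p_S)$, $Q(P)=\sum_{k=1}^S p_k\log^2(p_k)$, with the convention $0\log^2 0=0$. The empirical distribution is $\hat P_n=(N_1/n,\dots,N_S/n)$ where $N_k$ is the number of samples equal to $k$. *)

(* Defs.v *)
From HB Require Import structures.
From mathcomp Require Import all_boot all_order all_algebra.
From mathcomp Require Import reals exp.
Set Implicit Arguments. Unset Strict Implicit. Unset Printing Implicit Defensive.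
Import Order.TTheory GRing.Theory Num.Theory.
Local Open Scope ring_scope.

Definition is_prob (R : realType) (S : nat) (p : 'I_S -> R) : Prop :=
  (forall k, 0 <= p k) /\ \sum_(k < S) p k = 1.

Definition Qfun (R : realType) (S : nat) (p : 'I_S -> R) : R :=
  \sum_(k < S) (if p k == 0 then 0 else p k * (ln (p k)) ^+ 2).

Definition count_k (S n : nat) (x : {ffun 'I_n -> 'I_S}) (k : 'I_S) : nat :=
  #|[set i | x i == k]|.

Definition empirical (R : realType) (S n : nat) (x : {ffun 'I_n -> 'I_S})
  : 'I_S -> R := fun k => (count_k x k)%:R / n%:R.

Definition sample_prob (R : realType) (S n : nat) (p : 'I_S -> R)
  (x : {ffun 'I_n -> 'I_S}) : R := \prod_(i < n) p (x i).

Definition expected_Q_emp (R : realType) (S n : nat) (p : 'I_S -> R) : R :=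
  \sum_(x : {ffun 'I_n -> 'I_S}) sample_prob p x * Qfun (empirical R x).

Definition bias (R : realType) (S n : nat) (p : 'I_S -> R) : R :=
  expected_Q_emp n p - Qfun p.

(* Main.v *)
Require Import Defs.
From HB Require Import structures.
From mathcomp Require Import all_boot all_order all_algebra.
From mathcomp Require Import reals exp.
Import Order.TTheory GRing.Theory Num.Theory.
Local Open Scope ring_scope.
From mathcomp Require Import sequences ring lra.

Section S.
Variable R : realType.
Implicit Types x y : R.
Lemma ln_le_sub1 x : 0 < x -> ln x <= x - 1.
Proof. move=> x0; have := expR_ge1Dx (ln x); rewrite lnK ?posrE //; lra. Qed.
Lemma ln_ge_sub1 x : 0 < x -> 1 - x^-1 <= ln x.
Proof. move=> x0; have := expR_ge1Dx (- ln x); rewrite expRN lnK ?posrE //; lra. Qed.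
Lemma sq_ln y : 0 < y -> y * ln y ^+ 2 <= 4 * (y - 1) ^+ 2.
Proof.
move=> y0; set u := ln y / 2; set s := expR u.
have ys : y = s * s by rewrite /s -expRD /u -splitr lnK ?posrE.
have lu : ln y = 2 * u by rewrite /u; field.
rewrite lu ys.
have s0 : 0 < s by apply: expR_gt0.
have [u0|u0] := leP 0 u.
  have h1 : 1 + u <= s by apply: expR_ge1Dx.
  have h2 : u * s <= s * s - 1 by nra.
  have h3 : 0 <= u * s by nra.
  have : (u * s) ^+ 2 <= (s * s - 1) ^+ 2 by nra.
  nra.
have h1 : 1 - u <= s^-1 by rewrite /s -expRN; apply: expR_ge1Dx.
have h1' : s * (1 - u) <= 1.
  by have := ler_wpM2l (ltW s0) h1; rewrite mulfV ?lt0r_neq0.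
have s1 : s <= 1 by rewrite /s -expR0 ler_expR; exact: ltW.
have h2 : - u * s <= 1 - s * s by nra.
have h3 : 0 <= - u * s by nra.
have : (- u * s) ^+ 2 <= (1 - s * s) ^+ 2 by nra.
nra.
Qed.
End S.

Section S.
Variable R : realType.
Implicit Types x y : R.
Definition f x : R := if x == 0 then 0 else x * ln x ^+ 2.

Lemma split_ln (n N : nat) (p : R) : (0 < n)%N -> (0 < N)%N -> 0 < p ->
  let m := n%:R * p in let y := N%:R / m in
  n%:R * f (N%:R / n%:R) = m * (y * (ln y + ln p) ^+ 2) /\ 0 < y /\ 0 < m.
Proof.
move=> n0 N0 p0 m y.
have n0' : (0:R) < n%:R by rewrite ltr0n.
have N0' : (0:R) < N%:R by rewrite ltr0n.
have m0 : 0 < m by rewrite /m mulr_gt0.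
have y0 : 0 < y by rewrite /y divr_gt0.
have xe : N%:R / n%:R = y * p by rewrite /y /m; field; rewrite !gt_eqF.
have x0 : N%:R / n%:R != 0 :> R by rewrite gt_eqF // divr_gt0.
rewrite /f (negbTE x0) xe lnM ?posrE //; split=> //.
rewrite /m /y; field; rewrite !gt_eqF //.
Qed.

Lemma upper (n N : nat) (p : R) : (0 < n)%N -> 0 < p -> p <= 1 ->
  n%:R * f (N%:R / n%:R) <=
   N%:R * ln p ^+ 2 + 2 * ln p * (N%:R - n%:R * p) + 4 * (N%:R - n%:R * p) ^+ 2 / (n%:R * p).
Proof.
move=> n0 p0 p1; set m := n%:R * p.
have lp : ln p <= 0 by apply: ln_le0.
have m0 : 0 < m by rewrite /m mulr_gt0 // ltr0n.
case: N => [|N].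
  rewrite mul0r /f eqxx mulr0 mul0r add0r sub0r sqrrN.
  have -> : 4 * m ^+ 2 / m = 4 * m by field; rewrite gt_eqF.
  nra.
have [e [y0 _]] := @split_ln n N.+1 p n0 (ltn0Sn N) p0.
rewrite -/m in e y0; rewrite e.
set y := N.+1%:R / m.
have Ne : N.+1%:R = y * m by rewrite /y; field; rewrite gt_eqF.
rewrite Ne.
set t := ln y.
have h1 := @sq_ln R _ y0.
have h2 : y - 1 <= y * t.
  have := @ln_ge_sub1 R _ y0; move=> h; have := ler_wpM2l (ltW y0) h.
  by rewrite mulrBr mulr1 mulfV ?gt_eqF.
have h3 : ln p * (y * t - (y - 1)) <= 0.
  by apply: mulr_le0_ge0 => //; lra.
have key : y * (t + ln p) ^+ 2 <= y * ln p ^+ 2 + 2 * ln p * (y - 1) + 4 * (y - 1) ^+ 2.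
  rewrite -subr_ge0.
  have -> : y * ln p ^+ 2 + 2 * ln p * (y - 1) + 4 * (y - 1) ^+ 2 - y * (t + ln p) ^+ 2
    = (4 * (y - 1) ^+ 2 - y * t ^+ 2) + 2 * (- (ln p * (y * t - (y - 1)))) by ring.
  apply: addr_ge0; first by rewrite subr_ge0.
  by apply: mulr_ge0 => //; rewrite oppr_ge0.
have -> : y * m * ln p ^+ 2 + 2 * ln p * (y * m - m) + 4 * (y * m - m) ^+ 2 / m
   = m * (y * ln p ^+ 2 + 2 * ln p * (y - 1) + 4 * (y - 1) ^+ 2).
  by field; rewrite gt_eqF.
by apply: ler_wpM2l => //; exact: ltW.
Qed.

Lemma lower (n N : nat) (p : R) : (0 < n)%N -> 0 < p -> p <= 1 ->
  N%:R * ln p ^+ 2 + 2 * ln p * (N%:R * (N%:R - n%:R * p)) / (n%:R * p) <= n%:R * f (N%:R / n%:R).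
Proof.
move=> n0 p0 p1; set m := n%:R * p.
have lp : ln p <= 0 by apply: ln_le0.
have m0 : 0 < m by rewrite /m mulr_gt0 // ltr0n.
case: N => [|N].
  by rewrite /f !mul0r eqxx !(mulr0, mul0r, add0r).
have [e [y0 _]] := @split_ln n N.+1 p n0 (ltn0Sn N) p0.
rewrite -/m in e y0; rewrite e.
set y := N.+1%:R / m.
have Ne : N.+1%:R = y * m by rewrite /y; field; rewrite gt_eqF.
rewrite Ne.
set t := ln y.
have h2 : t <= y - 1 by apply: ln_le_sub1.
have h3 : ln p * (y * (y - 1) - y * t) <= 0.
  by apply: mulr_le0_ge0 => //; rewrite -mulrBr; apply: mulr_ge0; [exact: ltW| lra].
have h4 : 0 <= y * t ^+ 2 by apply: mulr_ge0; [exact: ltW| exact: sqr_ge0].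
have key : y * ln p ^+ 2 + 2 * ln p * (y * (y - 1)) <= y * (t + ln p) ^+ 2.
  rewrite -subr_ge0.
  have -> : y * (t + ln p) ^+ 2 - (y * ln p ^+ 2 + 2 * ln p * (y * (y - 1)))
    = y * t ^+ 2 + 2 * (- (ln p * (y * (y - 1) - y * t))) by ring.
  apply: addr_ge0 => //.
  by apply: mulr_ge0 => //; rewrite oppr_ge0.
have -> : y * m * ln p ^+ 2 + 2 * ln p * (y * m * (y * m - m)) / m
   = m * (y * ln p ^+ 2 + 2 * ln p * (y * (y - 1))).
  by field; rewrite gt_eqF.
by apply: ler_wpM2l => //; exact: ltW.
Qed.
End S.

Section S.
Variable R : realType.
Variables (S n : nat) (p : 'I_S -> R).
Hypothesis hp : \sum_(c < S) p c = 1.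
Variable k : 'I_S.
Definition w (x : {ffun 'I_n -> 'I_S}) : R := \prod_(i < n) p (x i).
Definition I (x : {ffun 'I_n -> 'I_S}) (i : 'I_n) : R := (x i == k)%:R.

Lemma prod_expect (G : 'I_n -> 'I_S -> R) :
  \sum_(x : {ffun 'I_n -> 'I_S}) w x * \prod_(i < n) G i (x i)
  = \prod_(i < n) \sum_(c < S) p c * G i c.
Proof.
rewrite bigA_distr_bigA /=; apply: eq_bigr => x _.
by rewrite /w -big_split.
Qed.

Lemma prod_single (a : 'I_n -> R) i : \prod_(l < n) (if l == i then a l else 1) = a i.
Proof. by rewrite -big_mkcond big_pred1_eq. Qed.

Lemma sum_ind : \sum_(c < S) p c * (c == k)%:R = p k.
Proof.
rewrite (bigD1 k) //= eqxx mulr1 big1 ?addr0 // => c /negbTE ->; by rewrite mulr0.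
Qed.

Lemma E1 : \sum_(x : {ffun 'I_n -> 'I_S}) w x = 1.
Proof.
have := prod_expect (fun _ _ => 1).
under eq_bigr do rewrite big1 // mulr1.
move=> ->; rewrite big1 // => i _; under eq_bigr do rewrite mulr1; exact: hp.
Qed.

Lemma EI i : \sum_(x : {ffun 'I_n -> 'I_S}) w x * I x i = p k.
Proof.
have := prod_expect (fun l c => if l == i then (c == k)%:R else 1).
under eq_bigr do rewrite (prod_single (fun l => ((_ : {ffun _ -> _}) l == k)%:R)).
move=> ->.
rewrite -(prod_single (fun _ => p k) i); apply: eq_bigr => l _.
case: (l == i); first exact: sum_ind.
by under eq_bigr do rewrite mulr1.
Qed.

Lemma EII i j : i != j ->
  \sum_(x : {ffun 'I_n -> 'I_S}) w x * (I x i * I x j) = p k * p k.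
Proof.
move=> ij.
have := prod_expect (fun l c => (if l == i then (c == k)%:R else 1) *
                                (if l == j then (c == k)%:R else 1)).
under eq_bigr do rewrite big_split /= (prod_single (fun l => ((_ : {ffun _ -> _}) l == k)%:R))
   (prod_single (fun l => ((_ : {ffun _ -> _}) l == k)%:R)).
move=> ->.
have -> : p k * p k = \prod_(l < n) ((if l == i then p k else 1) * (if l == j then p k else 1)).
  by rewrite big_split /= (prod_single (fun _ => p k)) (prod_single (fun _ => p k)).
apply: eq_bigr => l _ /=.
case: eqP => [->|li]; case: eqP => [lj|lj].
- by rewrite lj eqxx in ij.
- by under eq_bigr do rewrite mulr1; rewrite sum_ind mulr1.
- by under eq_bigr do rewrite mul1r; rewrite sum_ind mul1r.
- by under eq_bigr do rewrite !mulr1; rewrite hp mulr1.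
Qed.
End S.

Section S.
Variable R : realType.
Variables (S n : nat) (p : 'I_S -> R).
Hypothesis hp : \sum_(c < S) p c = 1.
Variable k : 'I_S.
Local Notation II := (@I R S n k).
Local Notation W := (@w R S n p).

Lemma cnt (x : {ffun 'I_n -> 'I_S}) : (count_k x k)%:R = \sum_(i < n) II x i :> R.
Proof.
rewrite /count_k -sum1_card natr_sum big_mkcond /=; apply: eq_bigr => i _.
by rewrite inE /I; case: (x i == k).
Qed.

Lemma EN : \sum_(x : {ffun 'I_n -> 'I_S}) W x * (count_k x k)%:R = n%:R * p k.
Proof.
under eq_bigr do rewrite cnt mulr_sumr.
rewrite exchange_big /=.
under eq_bigr do rewrite (@EI R S n p hp k).
by rewrite sumr_const card_ord mulr_natl.
Qed.

Lemma EN2 : (0 < n)%N ->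
  \sum_(x : {ffun 'I_n -> 'I_S}) W x * (count_k x k)%:R ^+ 2
  = n%:R * p k + n%:R * (n%:R - 1) * p k ^+ 2.
Proof.
move=> n0.
under eq_bigr do rewrite cnt expr2 mulr_suml mulr_sumr.
under eq_bigr do under eq_bigr do rewrite mulr_sumr mulr_sumr.
rewrite exchange_big /=.
under eq_bigr do rewrite exchange_big /=.
have E : forall i : 'I_n, \sum_(j < n) \sum_(x : {ffun 'I_n -> 'I_S}) W x * (II x i * II x j)
    = p k + p k * p k *+ n.-1.
  move=> i; rewrite (bigD1 i) //=.
  have -> : \sum_(x : {ffun 'I_n -> 'I_S}) W x * (II x i * II x i)
       = \sum_(x : {ffun 'I_n -> 'I_S}) W x * II x i.
    by apply: eq_bigr => x _; rewrite /I; case: (x i == k); rewrite ?mulr1 ?mulr0.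
  rewrite (@EI R S n p hp k); congr (_ + _).
  rewrite (eq_bigr (fun _ => p k * p k)); last by move=> j ji; apply: (@EII R S n p hp k); rewrite eq_sym.
  by rewrite sumr_const cardC1 card_ord.
under eq_bigr do rewrite E.
rewrite sumr_const card_ord.
case: n n0 => // m _ /=.
rewrite -[_ *+ m.+1]mulr_natl -[p k * p k *+ m]mulr_natl -addn1 natrD; ring.
Qed.
End S.

Section S.
Variable R : realType.
Variables (S n : nat) (p : 'I_S -> R).
Hypothesis hp : \sum_(c < S) p c = 1.
Hypothesis p0 : forall c, 0 <= p c.
Hypothesis n0 : (0 < n)%N.
Variable k : 'I_S.
Local Notation W := (@w R S n p).
Local Notation N x := ((count_k x k)%:R : R).

Lemma W_ge0 x : 0 <= W x.
Proof. by apply: prodr_ge0 => i _. Qed.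

Lemma Epoly a b c :
  \sum_(x : {ffun 'I_n -> 'I_S}) W x * (a + b * N x + c * N x ^+ 2)
  = a + b * (n%:R * p k) + c * (n%:R * p k + n%:R * (n%:R - 1) * p k ^+ 2).
Proof.
have e : forall x : {ffun 'I_n -> 'I_S},
  W x * (a + b * N x + c * N x ^+ 2) = a * W x + b * (W x * N x) + c * (W x * N x ^+ 2).
  by move=> x; ring.
under eq_bigr do rewrite e.
rewrite !big_split /= -!mulr_sumr.
rewrite (@E1 R S n p hp) (@EN R S n p hp k) (@EN2 R S n p hp k n0).
by rewrite mulr1.
Qed.
End S.

Lemma sq_exp (R : realType) (a : R) : a <= 0 -> a ^+ 2 * expR a <= 16 * expR (a / 2).
Proof.
move=> a0.
set b := - a / 4.
have b0 : 0 <= b by rewrite /b; lra.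
have h1 : b <= expR b by have := expR_ge1Dx b; lra.
have h2 : b ^+ 2 <= expR b ^+ 2 by nra.
have e1 : expR b ^+ 2 = expR (- a / 2) by rewrite expr2 -expRD /b; congr expR; field.
have e2 : expR (a / 2) = expR (- a / 2) * expR a by rewrite -expRD; congr expR; field.
have ea : 0 < expR a by apply: expR_gt0.
rewrite e2 -e1.
have -> : a ^+ 2 = 16 * b ^+ 2 by rewrite /b; field.
rewrite -mulrA; apply: ler_wpM2l => //.
by apply: ler_wpM2r => //; exact: ltW.
Qed.

Lemma f_ge0 (R : realType) (x : R) : 0 <= x -> 0 <= f R x.
Proof.
move=> x0; rewrite /f; case: (x == 0) => //.
by apply: mulr_ge0 => //; exact: sqr_ge0.
Qed.

Section K.
Variable R : realType.
Variables (S n : nat) (p : 'I_S -> R).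
Hypothesis hp : \sum_(c < S) p c = 1.
Hypothesis p0 : forall c, 0 <= p c.
Hypothesis n2 : (2 <= n)%N.
Variable k : 'I_S.
Local Notation W := (@w R S n p).
Local Notation N x := ((count_k x k)%:R : R).

Lemma bk :
  n%:R * `| \sum_(x : {ffun 'I_n -> 'I_S}) W x * f R (N x / n%:R) - f R (p k) |
  <= 16 * ln (n%:R : R) / ln 2.
Proof.
have n0 : (0 < n)%N by apply: leq_trans n2.
have nR : (0:R) < n%:R by rewrite ltr0n.
have pk1 : p k <= 1.
  rewrite -hp (bigD1 k) //= lerDl; exact: sumr_ge0.
have l2 : (0:R) < ln 2 by apply: ln_gt0; lra.
have l21 : ln (2:R) <= 1 by have := @ln_le_sub1 R 2 ltac:(lra); lra.
have lnn : ln (2:R) <= ln n%:R by rewrite ler_ln ?posrE // ?ler_nat //; lra.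
set K := 16 * ln (n%:R : R) / ln 2.
have K16 : 16 <= K.
  rewrite /K ler_pdivlMr //; nra.
have K4 : 4 * ln (n%:R : R) <= K.
  rewrite /K ler_pdivlMr //; nra.
have lng : 0 <= ln (n%:R : R) by lra.
rewrite -[X in X * _](ger0_norm (ltW nR)) -normrM ler_norml.
set Ef := \sum_(x : {ffun 'I_n -> 'I_S}) W x * f R (N x / n%:R).
have nEf : n%:R * Ef = \sum_(x : {ffun 'I_n -> 'I_S}) W x * (n%:R * f R (N x / n%:R)).
  by rewrite /Ef mulr_sumr; apply: eq_bigr => x _; ring.
have [pk0|pkp] := eqVneq (p k) 0.
  have -> : Ef = 0.
    rewrite /Ef big1 // => x _.
    have [c0|cp] := eqVneq (count_k x k) 0%N.
      by rewrite c0 mul0r /f eqxx mulr0.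
    have : (0 < #|[set i | x i == k]|)%N by rewrite lt0n.
    case/card_gt0P => i; rewrite inE => /eqP xi.
    by rewrite /w (bigD1 i) //= xi pk0 !mul0r.
  rewrite pk0 /f eqxx subrr mulr0; apply/andP; split; lra.
have pkp' : 0 < p k by rewrite lt0r pkp p0.
set m := n%:R * p k.
have m0 : 0 < m by rewrite /m mulr_gt0.
set lp := ln (p k).
have lp0 : lp <= 0 by apply: ln_le0.
have fp : n%:R * f R (p k) = m * lp ^+ 2 by rewrite /f (negbTE pkp) /m mulrA.
have EN2e : n%:R * p k + n%:R * (n%:R - 1) * p k ^+ 2 = m + m ^+ 2 - m * p k.
  by rewrite /m; ring.
have up : n%:R * Ef <= m * lp ^+ 2 + 4 * (1 - p k).
  rewrite nEf.
  apply: le_trans (_ : \sum_(x : {ffun 'I_n -> 'I_S}) W x *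
     ((- 2 * lp * m + 4 * m) + (lp ^+ 2 + 2 * lp - 8) * N x + (4 / m) * N x ^+ 2) <= _).
    apply: ler_sum => x _; apply: ler_wpM2l; first exact: W_ge0.
    apply: le_trans (@upper R n (count_k x k) (p k) n0 pkp' pk1) _.
    by rewrite -/m -/lp le_eqVlt; apply/orP; left; apply/eqP; field; exact: lt0r_neq0.
  rewrite (@Epoly R S n p hp n0 k) -/m EN2e.
  by rewrite le_eqVlt; apply/orP; left; apply/eqP; field; exact: lt0r_neq0.
apply/andP; split; last first.
  rewrite mulrBr fp; lra.
rewrite mulrBr fp.
have [big|small] := leP ((n%:R ^+ 2)^-1) (p k).
  have lpb : - (2 * ln (n%:R : R)) <= lp.
    have e : ln ((n%:R ^+ 2)^-1 : R) = - (2 * ln (n%:R : R)).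
      by rewrite lnV ?posrE ?exprn_gt0 // lnXn // mulr_natl.
    by rewrite -e ler_ln // ?posrE ?invr_gt0 ?exprn_gt0.
  have lo : m * lp ^+ 2 + 2 * lp * (1 - p k) <= n%:R * Ef.
    rewrite nEf.
    apply: le_trans (_ : \sum_(x : {ffun 'I_n -> 'I_S}) W x *
       (0 + (lp ^+ 2 - 2 * lp) * N x + (2 * lp / m) * N x ^+ 2) <= _); last first.
      apply: ler_sum => x _; apply: ler_wpM2l; first exact: W_ge0.
      apply: le_trans _ (@lower R n (count_k x k) (p k) n0 pkp' pk1).
      by rewrite -/m -/lp le_eqVlt; apply/orP; left; apply/eqP; field; exact: lt0r_neq0.
    rewrite (@Epoly R S n p hp n0 k) -/m EN2e.
    by rewrite le_eqVlt; apply/orP; left; apply/eqP; field; exact: lt0r_neq0.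
  have : 2 * lp <= 2 * lp * (1 - p k) by nra.
  lra.
have Ef0 : 0 <= n%:R * Ef.
  rewrite nEf; apply: sumr_ge0 => x _; apply: mulr_ge0; first exact: W_ge0.
  apply: mulr_ge0; first exact: ltW.
  by apply: f_ge0; apply: divr_ge0; exact: ler0n.
have lps : lp / 2 <= - ln (n%:R : R).
  have e : ln ((n%:R ^+ 2)^-1 : R) = - (2 * ln (n%:R : R)).
    by rewrite lnV ?posrE ?exprn_gt0 // lnXn // mulr_natl.
  have : lp < - (2 * ln (n%:R : R)).
    by rewrite -e ltr_ln // ?posrE ?invr_gt0 ?exprn_gt0.
  lra.
have mb : m * lp ^+ 2 <= 16.
  have pe : p k = expR lp by rewrite /lp lnK ?posrE.
  have h := @sq_exp R lp lp0.
  have h2 : expR (lp / 2) <= (n%:R)^-1.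
    have : expR (lp / 2) <= expR (- ln (n%:R : R)) by rewrite ler_expR.
    by rewrite expRN lnK ?posrE.
  have e : m * lp ^+ 2 = n%:R * (lp ^+ 2 * expR lp) by rewrite /m -pe; ring.
  rewrite e.
  apply: le_trans (_ : n%:R * (16 * (n%:R)^-1) <= _); last first.
    by rewrite mulrCA mulfV ?mulr1 // lt0r_neq0.
  apply: ler_wpM2l; first exact: ltW.
  apply: le_trans h _; apply: ler_wpM2l => //.
lra.
Qed.
End K.

Theorem mainTheorem7 (R : realType) :
  exists C : R, exists N0 : nat,
    forall (S : nat) (p : 'I_S -> R), is_prob p ->
    forall n : nat, (N0 <= n)%N ->
      `|bias n p| <= C * S%:R * ln (n%:R) / n%:R.
Proof.
exists (16 / ln 2), 2%N => S p [p0 hp] n n2.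
have n0 : (0 < n)%N by apply: leq_trans n2.
have nR : (0:R) < n%:R by rewrite ltr0n.
have e : bias n p = \sum_(k < S)
   (\sum_(x : {ffun 'I_n -> 'I_S}) @w R S n p x * f R ((count_k x k)%:R / n%:R) - f R (p k)).
  rewrite sumrB /bias /expected_Q_emp /Qfun; congr (_ - _).
  under eq_bigr do rewrite mulr_sumr.
  by rewrite exchange_big.
rewrite e.
apply: le_trans (ler_norm_sum _ _ _) _.
apply: le_trans (_ : \sum_(k < S) (16 * ln (n%:R : R) / ln 2) / n%:R <= _).
  apply: ler_sum => k _.
  rewrite ler_pdivlMr // mulrC.
  exact: (@bk R S n p hp p0 n2 k).
rewrite sumr_const card_ord -mulr_natl.
by rewrite le_eqVlt; apply/orP; left; apply/eqP; field;
   rewrite ?lt0r_neq0 //; apply: ln_gt0; lra.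
Qed.
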